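(* (Consistency of DCC.) There is no label context $\Delta$, universe $U$ and DCC term $M$ such that $\Delta;\cdot\vdash M:(\Pi A{:}U.\,A)$.
   Context: DCC (Defunctionalized Calculus of Constructions): expressions $A,B,L,M,N::=x\mid U_i\mid\Pi x{:}A.B\mid L@M\mid\ell_i\{\overline M\}$, where $\ell_i$ ($i\in\mathbb N$) are label names disjoint from variables and $\overline M=M_1,\dots,M_n$ ($n\ge0$); universes are $U_i$. Type contexts $\Gamma::=\cdot\mid\Gamma,x{:}A$; label contexts $\Delta::=\cdot\mid\Delta,\ell_i(\{\overline x{:}\overline A\},x{:}A\mapsto M:B)$. Substitution standard with $\ell\{\overline M\}[N/x]=\ell\{\overline{M[N/x]}\}$; $[\overline M/\overline x]=[M_1/x_1,\dots,M_n/x_n]$. Reduction: $\Delta\vdash\ell\{\overline M\}@N\triangleright L[\overline M/\overline x,N/x]$ when $\ell(\{\overline x{:}\overline A\},x{:}A\mapsto L:B)\in\Delta$. Equivalence $\Delta\vdash M\equiv N$: common reduct; or $\Delta\vdash L\triangleright^*\ell\{\overline N\}$, $\Delta\vdash M\triangleright^*M'$, $\ell(\{\overline x{:}\overline A\},x{:}A\mapsto N:B)\in\Delta$, $\Delta\vdash N[\overline N/\overline x]\equiv M'@x$ give $\Delta\vdash L\equiv M$; or symmetrically. Typing and formation (mutual): variables from a well-formed context, $U_i:U_{i+1}$, $\Pi x{:}A.B:U_{\max(i,j)}$ when $A:U_i$ and $B:U_j$ under $x{:}A$, $M@N:B[N/x]$ when $M:\Pi x{:}A.B$ and $N:A$,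 conversion along $\equiv$ to a type $B:U_i$, and: if $\vdash\Delta;\Gamma$, $\ell(\{\overline x{:}\overline A\},x{:}A\mapsto M:B)\in\Delta$, $|\overline M|=|\overline x|$ and $\Delta;\Gamma\vdash M_k:A_k[M_1/x_1,\dots,M_{k-1}/x_{k-1}]$ for all $k$, then $\Delta;\Gamma\vdash\ell\{\overline M\}:\Pi x{:}A[\overline M/\overline x].B[\overline M/\overline x]$. Formation: $\vdash\cdot;\cdot$; a fresh label entry $\ell(\{\overline x{:}\overline A\},x{:}A\mapsto M:B)$ may be added when $\Delta;\overline x{:}\overline A\vdash\Pi x{:}A.B:U_i$ and $\Delta;\overline x{:}\overline A,x{:}A\vdash M:B$; $\vdash\Delta;\Gamma$ and $\Delta;\Gamma\vdash A:U_i$ give $\vdash\Delta;\Gamma,x{:}A$. *)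

(* Defs.v *)
(* DCC (Defunctionalized Calculus of Constructions),
   represented with de Bruijn indices. *)
From Stdlib Require Import List Arith.
Import ListNotations.

(* Expressions: x | U_i | Pi x:A.B | L @ M | l_i{M1,...,Mn} *)
Inductive term : Type :=
| Var  : nat -> term
| Univ : nat -> term
| Pi   : term -> term -> term        (* Pi x:A. B ; B binds index 0 *)
| App  : term -> term -> term
| Lab  : nat -> list term -> term.

Fixpoint ren (xi : nat -> nat) (t : term) : term :=
  match t with
  | Var x => Var (xi x)
  | Univ i => Univ i
  | Pi A B => Pi (ren xi A) (ren (fun k => match k with 0 => 0 | S k' => S (xi k') end) B)
  | App M N => App (ren xi M) (ren xi N)
  | Lab l Ms => Lab l (map (ren xi) Ms)
  end.

Definition lift1 (t : term) : term := ren S t.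

Definition scons (M : term) (sigma : nat -> term) : nat -> term :=
  fun k => match k with 0 => M | S k' => sigma k' end.

Definition up (sigma : nat -> term) : nat -> term :=
  scons (Var 0) (fun k => lift1 (sigma k)).

Fixpoint subst (sigma : nat -> term) (t : term) : term :=
  match t with
  | Var x => sigma x
  | Univ i => Univ i
  | Pi A B => Pi (subst sigma A) (subst (up sigma) B)
  | App M N => App (subst sigma M) (subst sigma N)
  | Lab l Ms => Lab l (map (subst sigma) Ms)
  end.

Definition subst1 (N : term) (B : term) : term := subst (scons N Var) B.

(* The substitution [M1/x1, ..., Mn/xn] for a telescope x1,...,xn
   (xn is the innermost variable, index 0). *)
Definition tele_subst (Ms : list term) : nat -> term :=
  fold_left (fun sigma M => scons M sigma) Ms Var.

Definition tele_subst_last (Ms : list term) (N : term) : nat -> term :=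
  scons N (tele_subst Ms).

(* Label context entries  l({x1:A1,...,xn:An}, x:A |-> M : B).
   A lives in context x1..xn; M and B in context x1..xn,x. *)
Record entry : Type := mkEntry {
  lname   : nat;
  lparams : list term;    (* [A1; ...; An] (A_k in context x1..x_{k-1}) *)
  ldom    : term;
  lbody   : term;
  lcod    : term
}.

Definition label_ctx := list entry.
(* Type contexts: most recent binding first. *)
Definition ctx := list term.

Definition tele_ctx (As : list term) : ctx := rev As.

Definition label_in (D : label_ctx) (l : nat) (e : entry) : Prop :=
  In e D /\ lname e = l.

Inductive step (D : label_ctx) : term -> term -> Prop :=
| step_beta : forall l Ms N e,
    label_in D l e ->
    step D (App (Lab l Ms) N) (subst (tele_subst_last Ms N) (lbody e))
| step_pi1 : forall A A' B, step D A A' -> step D (Pi A B) (Pi A' B)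
| step_pi2 : forall A B B', step D B B' -> step D (Pi A B) (Pi A B')
| step_app1 : forall M M' N, step D M M' -> step D (App M N) (App M' N)
| step_app2 : forall M N N', step D N N' -> step D (App M N) (App M N')
| step_lab : forall l Ms1 M M' Ms2, step D M M' ->
    step D (Lab l (Ms1 ++ M :: Ms2)) (Lab l (Ms1 ++ M' :: Ms2)).

Inductive steps (D : label_ctx) : term -> term -> Prop :=
| steps_refl : forall M, steps D M M
| steps_step : forall M N P, step D M N -> steps D N P -> steps D M P.

Inductive conv (D : label_ctx) : term -> term -> Prop :=
| conv_red : forall M N P, steps D M P -> steps D N P -> conv D M N
| conv_eta_l : forall L M M' l Ns e,
    steps D L (Lab l Ns) -> steps D M M' -> label_in D l e ->
    conv D (subst (up (tele_subst Ns)) (lbody e)) (App (lift1 M') (Var 0)) ->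
    conv D L M
| conv_eta_r : forall L M M' l Ns e,
    steps D L (Lab l Ns) -> steps D M M' -> label_in D l e ->
    conv D (App (lift1 M') (Var 0)) (subst (up (tele_subst Ns)) (lbody e)) ->
    conv D M L.

Inductive wf : label_ctx -> ctx -> Prop :=
| wf_empty : wf [] []
| wf_label : forall D As A M B i l,
    (forall e, In e D -> lname e <> l) ->
    typing D (tele_ctx As) (Pi A B) (Univ i) ->
    typing D (A :: tele_ctx As) M B ->
    wf (mkEntry l As A M B :: D) []
| wf_cons : forall D G A i,
    wf D G -> typing D G A (Univ i) -> wf D (A :: G)
with typing : label_ctx -> ctx -> term -> term -> Prop :=
| ty_var : forall D G x A,
    wf D G -> nth_error G x = Some A ->
    typing D G (Var x) (ren (fun k => k + S x) A)
| ty_univ : forall D G i,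
    wf D G -> typing D G (Univ i) (Univ (S i))
| ty_pi : forall D G A B i j,
    typing D G A (Univ i) -> typing D (A :: G) B (Univ j) ->
    typing D G (Pi A B) (Univ (Nat.max i j))
| ty_app : forall D G M N A B,
    typing D G M (Pi A B) -> typing D G N A ->
    typing D G (App M N) (subst1 N B)
| ty_conv : forall D G M A B i,
    typing D G M A -> conv D A B -> typing D G B (Univ i) ->
    typing D G M B
| ty_lab : forall D G l Ms e,
    wf D G -> label_in D l e ->
    length Ms = length (lparams e) ->
    (forall k, k < length Ms ->
       typing D G (nth k Ms (Var 0))
         (subst (tele_subst (firstn k Ms)) (nth k (lparams e) (Var 0)))) ->
    typing D G (Lab l Ms)
      (Pi (subst (tele_subst Ms) (ldom e)) (subst (up (tele_subst Ms)) (lcod e))).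

(* Main.v *)
Require Import Defs.
From Stdlib Require Import List Arith Lia FunctionalExtensionality PropExtensionality.
From Stdlib Require Import Classical IndefiniteDescription.
Import ListNotations.


Lemma term_ind' (P : term -> Prop) :
  (forall n, P (Var n)) -> (forall i, P (Univ i)) ->
  (forall A B, P A -> P B -> P (Pi A B)) ->
  (forall M N, P M -> P N -> P (App M N)) ->
  (forall l Ms, Forall P Ms -> P (Lab l Ms)) -> forall t, P t.
Proof.
  intros H1 H2 H3 H4 H5. fix IH 1. intros t. destruct t.
  - apply H1. - apply H2. - apply H3; apply IH. - apply H4; apply IH.
  - apply H5. induction l as [|x xs IHl]; constructor; [apply IH| exact IHl].
Qed.

Lemma map_ext_Forall {A B} (f g : A -> B) l :
  Forall (fun x => f x = g x) l -> map f l = map g l.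
Proof. induction 1; simpl; congruence. Qed.

Definition upren (xi : nat -> nat) : nat -> nat :=
  fun k => match k with 0 => 0 | S k' => S (xi k') end.

Lemma ren_Pi xi A B : ren xi (Pi A B) = Pi (ren xi A) (ren (upren xi) B).
Proof. reflexivity. Qed.

Lemma ren_as_subst xi t : ren xi t = subst (fun k => Var (xi k)) t.
Proof.
  revert xi. induction t using term_ind'; intros xi; simpl; try reflexivity.
  - rewrite IHt1, IHt2. f_equal. f_equal. apply functional_extensionality.
    intros [|k]; reflexivity.
  - rewrite IHt1, IHt2. reflexivity.
  - f_equal. apply map_ext_Forall. eapply Forall_impl; [|exact H]. simpl. auto.
Qed.

Lemma subst_ren sigma xi t : subst sigma (ren xi t) = subst (fun k => sigma (xi k)) t.
Proof.
  revert sigma xi. induction t using term_ind'; intros sigma xi; simpl; try reflexivity.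
  - rewrite IHt1, IHt2. f_equal. f_equal. apply functional_extensionality.
    intros [|k]; reflexivity.
  - rewrite IHt1, IHt2. reflexivity.
  - f_equal. rewrite map_map. apply map_ext_Forall. eapply Forall_impl; [|exact H]. simpl. auto.
Qed.

Lemma ren_ren xi zeta t : ren xi (ren zeta t) = ren (fun k => xi (zeta k)) t.
Proof. rewrite (ren_as_subst xi), subst_ren, <- ren_as_subst. reflexivity. Qed.

Lemma ren_subst xi sigma t : ren xi (subst sigma t) = subst (fun k => ren xi (sigma k)) t.
Proof.
  revert xi sigma. induction t using term_ind'; intros xi sigma; simpl; try reflexivity.
  - change (fun k => match k with 0 => 0 | S k' => S (xi k') end) with (upren xi).
    rewrite IHt1, IHt2. f_equal. f_equal. apply functional_extensionality.
    intros [|k]; simpl; [reflexivity|]. unfold lift1. rewrite !ren_ren. reflexivity.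
  - rewrite IHt1, IHt2. reflexivity.
  - f_equal. rewrite map_map. apply map_ext_Forall. eapply Forall_impl; [|exact H]. simpl. auto.
Qed.

Lemma subst_subst sigma tau t :
  subst sigma (subst tau t) = subst (fun k => subst sigma (tau k)) t.
Proof.
  revert sigma tau. induction t using term_ind'; intros sigma tau; simpl; try reflexivity.
  - rewrite IHt1, IHt2. f_equal. f_equal. apply functional_extensionality.
    intros [|k]; simpl; [reflexivity|]. unfold lift1.
    rewrite subst_ren, ren_subst. reflexivity.
  - rewrite IHt1, IHt2. reflexivity.
  - f_equal. rewrite map_map. apply map_ext_Forall. eapply Forall_impl; [|exact H]. simpl. auto.
Qed.

Lemma up_var : up Var = Var.
Proof. apply functional_extensionality. intros [|k]; reflexivity. Qed.

Lemma subst_id t : subst Var t = t.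
Proof.
  induction t using term_ind'; simpl; try reflexivity.
  - rewrite up_var, IHt1, IHt2. reflexivity.
  - rewrite IHt1, IHt2. reflexivity.
  - f_equal. induction H; simpl; congruence.
Qed.

Lemma subst_up_lift sigma t : subst (up sigma) (lift1 t) = lift1 (subst sigma t).
Proof. unfold lift1. rewrite subst_ren, ren_subst. reflexivity. Qed.

Lemma subst1_up a sigma B : subst1 a (subst (up sigma) B) = subst (scons a sigma) B.
Proof.
  unfold subst1. rewrite subst_subst. f_equal. apply functional_extensionality.
  intros [|k]; simpl; [reflexivity|]. unfold lift1. rewrite subst_ren. simpl. apply subst_id.
Qed.

Lemma subst_subst1 sigma N B :
  subst sigma (subst1 N B) = subst1 (subst sigma N) (subst (up sigma) B).
Proof.
  rewrite subst1_up. unfold subst1. rewrite subst_subst. f_equal.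
  apply functional_extensionality. intros [|k]; reflexivity.
Qed.

Lemma subst_scons_shift a sigma x A :
  subst (scons a sigma) (ren (fun k => k + S x) A) = subst sigma (ren (fun k => k + x) A).
Proof.
  rewrite !subst_ren. f_equal. apply functional_extensionality. intros k.
  replace (k + S x) with (S (k + x)) by lia. reflexivity.
Qed.

Lemma subst_ren0 sigma A : subst sigma (ren (fun k => k + 0) A) = subst sigma A.
Proof.
  rewrite subst_ren. f_equal. apply functional_extensionality. intros k. f_equal. lia.
Qed.

Fixpoint closed_at (n : nat) (t : term) : Prop :=
  match t with
  | Var x => x < n
  | Univ _ => True
  | Pi A B => closed_at n A /\ closed_at (S n) B
  | App M N => closed_at n M /\ closed_at n N
  | Lab _ Ms => fold_right (fun M acc => closed_at n M /\ acc) True Ms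
  end.

Lemma fold_Forall {A} (P : A -> Prop) l :
  fold_right (fun M acc => P M /\ acc) True l <-> Forall P l.
Proof.
  induction l; simpl; split; intros H; auto.
  - destruct H. constructor; tauto.
  - inversion H; subst. tauto.
Qed.

Lemma Forall_mp {A} (P Q : A -> Prop) l :
  Forall (fun t => P t -> Q t) l -> Forall P l -> Forall Q l.
Proof. induction 1; intros H'; constructor; inversion H'; auto. Qed.

Lemma closed_lab n l Ms : closed_at n (Lab l Ms) <-> Forall (closed_at n) Ms.
Proof. apply fold_Forall. Qed.

Lemma subst_closed_ext n t sigma tau :
  closed_at n t -> (forall k, k < n -> sigma k = tau k) -> subst sigma t = subst tau t.
Proof.
  revert n sigma tau. induction t using term_ind'; intros m sigma tau Hc Hst; simpl in *.
  - auto.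
  - reflexivity.
  - destruct Hc. f_equal; [eauto|]. eapply IHt2; [eassumption|].
    intros [|k] Hk; simpl; [reflexivity|]. unfold lift1. f_equal. apply Hst. lia.
  - destruct Hc. f_equal; eauto.
  - f_equal. apply fold_Forall in Hc. revert Hc. induction H; intros Hc; simpl; [reflexivity|].
    inversion Hc; subst. f_equal; eauto.
Qed.


Lemma closed_ren n m t xi :
  closed_at n t -> (forall k, k < n -> xi k < m) -> closed_at m (ren xi t).
Proof.
  revert n m xi. induction t using term_ind'; intros n0 m xi Hc Hs; simpl in *.
  - auto.
  - auto.
  - destruct Hc. split; [eauto|]. eapply IHt2; [eassumption|].
    intros [|k] Hk; simpl; [lia|]. specialize (Hs k). lia.
  - destruct Hc. split; eauto.
  - apply fold_Forall in Hc. apply fold_Forall. revert Hc; induction H; intros Hc; simpl; constructor; inversion Hc; subst; eauto.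
Qed.

Lemma closed_subst n m t sigma :
  closed_at n t -> (forall k, k < n -> closed_at m (sigma k)) -> closed_at m (subst sigma t).
Proof.
  revert n m sigma. induction t using term_ind'; intros n0 m sigma Hc Hs; simpl in *.
  - auto.
  - auto.
  - destruct Hc. split; [eauto|]. eapply IHt2; [eassumption|].
    intros [|k] Hk; simpl; [lia|]. unfold lift1. eapply closed_ren; [apply Hs; lia|].
    intros; lia.
  - destruct Hc. split; eauto.
  - apply fold_Forall in Hc. apply fold_Forall. revert Hc; induction H; intros Hc; simpl; constructor; inversion Hc; subst; eauto.
Qed.

Fixpoint good (D : label_ctx) (t : term) : Prop :=
  match t with
  | Var _ => True
  | Univ _ => True
  | Pi A B => good D A /\ good D B
  | App M N => good D M /\ good D N
  | Lab l Ms => (exists e, label_in D l e /\ length Ms = length (lparams e)) /\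
                fold_right (fun M acc => good D M /\ acc) True Ms
  end.

Lemma good_lab D l Ms : good D (Lab l Ms) <->
  (exists e, label_in D l e /\ length Ms = length (lparams e)) /\ Forall (good D) Ms.
Proof. simpl. rewrite fold_Forall. tauto. Qed.

Lemma good_mono D D' t : (forall e, In e D -> In e D') -> good D t -> good D' t.
Proof.
  intros Hi. induction t using term_ind'; simpl; try tauto.
  rewrite !fold_Forall. intros [[e [[He1 He2] Hl]] Hf]. split.
  - exists e. repeat split; auto.
  - eapply Forall_mp; [|exact Hf]. eapply Forall_impl; [|exact H]. auto.
Qed.


Lemma good_ren D t xi : good D t -> good D (ren xi t).
Proof.
  revert xi. induction t using term_ind'; intros xi; simpl; try tauto.
  - intros [H1 H2]; split; auto.
  - intros [H1 H2]; split; auto.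
  - rewrite !fold_Forall. intros [[e [He Hl]] Hf]. split.
    + exists e. rewrite length_map. auto.
    + apply Forall_map. eapply Forall_mp; [|exact Hf]. eapply Forall_impl; [|exact H]. auto.
Qed.

Lemma good_subst D t sigma : (forall k, good D (sigma k)) -> good D t -> good D (subst sigma t).
Proof.
  revert sigma. induction t using term_ind'; intros sigma Hs; simpl; try tauto.
  - intros; apply Hs.
  - intros [H1 H2]. split; auto. apply IHt2; auto. intros [|k]; simpl; auto.
    unfold lift1. apply good_ren. auto.
  - intros [H1 H2]; split; auto.
  - rewrite !fold_Forall. intros [[e [He Hl]] Hf]. split.
    + exists e. rewrite length_map. auto.
    + apply Forall_map. eapply Forall_mp; [|exact Hf]. eapply Forall_impl; [|exact H]. auto.
Qed.

Lemma fold_tele_spec Ms s0 j :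
  fold_left (fun sigma M => scons M sigma) Ms s0 j =
  if j <? length Ms then nth (length Ms - S j) Ms (Var 0) else s0 (j - length Ms).
Proof.
  revert s0 j. induction Ms as [|M Ms IH]; intros s0 j; simpl.
  - rewrite Nat.sub_0_r. reflexivity.
  - rewrite IH. destruct (Nat.ltb_spec j (length Ms)); destruct (Nat.ltb_spec j (S (length Ms))); try lia.
    + replace (length Ms - j) with (S (length Ms - S j)) by lia. reflexivity.
    + destruct (Nat.eq_dec j (length Ms)).
      * subst. rewrite Nat.sub_diag. simpl. reflexivity.
      * lia.
    + replace (j - length Ms) with (S (j - S (length Ms))) by lia. reflexivity.
Qed.

Lemma tele_spec Ms j :
  tele_subst Ms j = if j <? length Ms then nth (length Ms - S j) Ms (Var 0) else Var (j - length Ms).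
Proof. unfold tele_subst. apply fold_tele_spec. Qed.


Lemma nth_map' {A B} (f : A -> B) l n d d' : n < length l -> nth n (map f l) d' = f (nth n l d).
Proof. intros H. rewrite (nth_indep _ d' (f d)) by (rewrite length_map; auto). apply map_nth. Qed.

Lemma tele_map f Ms j : j < length Ms -> tele_subst (map f Ms) j = f (tele_subst Ms j).
Proof.
  intros H. rewrite !tele_spec, length_map.
  destruct (Nat.ltb_spec j (length Ms)); try lia.
  apply nth_map'. lia.
Qed.


Scheme wf_mut := Induction for wf Sort Prop
  with typing_mut := Induction for typing Sort Prop.

Definition CSyn (D : label_ctx) (G : ctx) : Prop :=
  forall x A, nth_error G x = Some A -> good D A /\ closed_at (length G - S x) A.

Definition names_fun (D : label_ctx) : Prop :=
  forall e1 e2, In e1 D -> In e2 D -> lname e1 = lname e2 -> e1 = e2.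

Definition ESyn (D : label_ctx) : Prop :=
  names_fun D /\
  forall e, In e D ->
    CSyn D (rev (lparams e)) /\ good D (ldom e) /\ good D (lcod e) /\ good D (lbody e) /\
    closed_at (length (lparams e)) (ldom e) /\ closed_at (S (length (lparams e))) (lcod e) /\
    closed_at (S (length (lparams e))) (lbody e).

Lemma CSyn_mono D D' G : (forall e, In e D -> In e D') -> CSyn D G -> CSyn D' G.
Proof.
  intros Hi H x A Hx. destruct (H x A Hx). split; auto. eapply good_mono; eauto.
Qed.

Lemma tele_good D Ms k : Forall (good D) Ms -> good D (tele_subst Ms k).
Proof.
  intros HF. rewrite tele_spec. destruct (Nat.ltb_spec k (length Ms)); simpl; auto.
  rewrite Forall_forall in HF. apply HF. apply nth_In. lia.
Qed.

Lemma tele_closed m Ms k : Forall (closed_at m) Ms -> k < length Ms -> closed_at m (tele_subst Ms k).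
Proof.
  intros HF Hk. rewrite tele_spec. destruct (Nat.ltb_spec k (length Ms)); try lia.
  rewrite Forall_forall in HF. apply HF. apply nth_In. lia.
Qed.

Lemma Forall_of_nth (P : term -> Prop) Ms :
  (forall k, k < length Ms -> P (nth k Ms (Var 0))) -> Forall P Ms.
Proof.
  intros H. apply Forall_forall. intros x Hx. destruct (In_nth _ _ (Var 0) Hx) as [k [Hk Hn]].
  subst. auto.
Qed.

Combined Scheme wf_typing_mut from wf_mut, typing_mut.

Lemma syn_inv :
  (forall D G, wf D G -> ESyn D /\ CSyn D G) /\
  (forall D G M A, typing D G M A ->
     ESyn D /\ CSyn D G /\ good D M /\ good D A /\
     closed_at (length G) M /\ closed_at (length G) A).
Proof.
  apply (wf_typing_mut (fun D G _ => ESyn D /\ CSyn D G)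
                  (fun D G M A _ => ESyn D /\ CSyn D G /\ good D M /\ good D A /\
                     closed_at (length G) M /\ closed_at (length G) A)).
  - split.
    + split; [intros e1 e2 []|intros e []].
    + intros x A Hx. destruct x; discriminate.
  - intros D As A M B i l Hfresh t [HE [HC [HgP [_ [HcP _]]]]] t0 [_ [_ [HgM [HgB [HcM _]]]]].
    set (e := {| lname := l; lparams := As; ldom := A; lbody := M; lcod := B |}).
    assert (Hi : forall e', In e' D -> In e' (e :: D)) by (intros; right; auto).
    unfold tele_ctx in *. simpl in HcM. rewrite length_rev in *.
    destruct HE as [Hn HE]. split; [split|].
    + intros e1 e2 [<-|H1] [<-|H2] Hl; auto.
      * exfalso. apply (Hfresh e2 H2). simpl in Hl. auto.
      * exfalso. apply (Hfresh e1 H1). simpl in Hl. auto.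
    + intros e' [<-|He']; simpl.
      * destruct HgP as [HgA HgB']. destruct HcP as [HcA HcB].
        split; [eapply CSyn_mono; eauto|].
        repeat split; try (eapply good_mono; eauto); auto.
      * destruct (HE e' He') as [h1 [h2 [h3 [h4 h5]]]].
        split; [eapply CSyn_mono; eauto|].
        repeat split; try (eapply good_mono; eauto); try tauto.
    + intros x X Hx. destruct x; discriminate.
  - intros D G A i w [HE HC] t [_ [_ [HgA [_ [HcA _]]]]]. split; auto.
    intros [|x] X Hx; simpl in Hx.
    + injection Hx as <-. simpl. rewrite Nat.sub_0_r. auto.
    + destruct (HC x X Hx). simpl. auto.
  - intros D G x A w [HE HC] Hx. destruct (HC x A Hx) as [Hg Hc].
    assert (x < length G) by (apply nth_error_Some; congruence).
    refine (conj HE (conj HC _)). repeat split; auto.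
    + apply good_ren; auto.
    + eapply closed_ren; eauto. intros; lia.
  - intros D G i w [HE HC]. refine (conj HE (conj HC _)). repeat split; auto.
  - intros D G A B i j t [HE [HC [HgA [_ [HcA _]]]]] t0 [_ [_ [HgB [_ [HcB _]]]]].
    refine (conj HE (conj HC _)). repeat split; auto.
  - intros D G M N A B t [HE [HC [HgM [[HgA HgB] [HcM [HcA HcB]]]]]] t0 [_ [_ [HgN [_ [HcN _]]]]].
    refine (conj HE (conj HC _)). repeat split; auto.
    + apply good_subst; auto. intros [|k]; simpl; auto.
    + eapply closed_subst; eauto. intros [|k] Hk; simpl; auto. lia.
  - intros D G M A B i t [HE [HC [HgM [_ [HcM _]]]]] c t0 [_ [_ [HgB [_ [HcB _]]]]].
    refine (conj HE (conj HC _)). repeat split; auto.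
  - intros D G l Ms e w [HE HC] Hl Hlen Hk IH.
    destruct Hl as [HinE Hname].
    destruct HE as [Hn HE']. destruct (HE' e HinE) as [_ [Hgd [Hgc [_ [Hcd [Hcc _]]]]]].
    assert (HgMs : Forall (good D) Ms) by (apply Forall_of_nth; intros k Hk'; apply (IH k Hk')).
    assert (HcMs : Forall (closed_at (length G)) Ms) by (apply Forall_of_nth; intros k Hk'; apply (IH k Hk')).
    split; [split; auto|]. split; auto. split; [|split; [|split]].
    + apply good_lab. split; [exists e; split; [split|]; auto|]; auto.
    + simpl. split; apply good_subst; auto.
      * intros; apply tele_good; auto.
      * intros [|k]; simpl; auto. apply good_ren. apply tele_good; auto.
    + apply fold_Forall; auto.
    + simpl. split.
      * eapply closed_subst; eauto. intros k Hk'. apply tele_closed; auto. lia.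
      * eapply closed_subst; eauto. intros [|k] Hk'; simpl; [lia|].
        unfold lift1. eapply closed_ren; [apply tele_closed; eauto; lia|]. intros; lia.
Qed.


Lemma steps_trans D a b c : steps D a b -> steps D b c -> steps D a c.
Proof. induction 1; intros; auto. econstructor; eauto. Qed.

Lemma steps_one D a b : step D a b -> steps D a b.
Proof. intros; econstructor; eauto. constructor. Qed.

Lemma steps_pi D A A' B B' : steps D A A' -> steps D B B' -> steps D (Pi A B) (Pi A' B').
Proof.
  intros H1 H2. apply steps_trans with (Pi A' B).
  - induction H1; [constructor|]. econstructor; [apply step_pi1; eauto|]. auto.
  - induction H2; [constructor|]. econstructor; [apply step_pi2; eauto|]. auto.
Qed.

Lemma steps_app D M M' N N' : steps D M M' -> steps D N N' -> steps D (App M N) (App M' N').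
Proof.
  intros H1 H2. apply steps_trans with (App M' N).
  - induction H1; [constructor|]. econstructor; [apply step_app1; eauto|]. auto.
  - induction H2; [constructor|]. econstructor; [apply step_app2; eauto|]. auto.
Qed.

Lemma steps_lab1 D l Ms1 M M' Ms2 : steps D M M' ->
  steps D (Lab l (Ms1 ++ M :: Ms2)) (Lab l (Ms1 ++ M' :: Ms2)).
Proof. induction 1; [constructor|]. econstructor; [apply step_lab; eauto|]. auto. Qed.

Lemma steps_lab_gen D l pre Ms Ms' : Forall2 (steps D) Ms Ms' ->
  steps D (Lab l (pre ++ Ms)) (Lab l (pre ++ Ms')).
Proof.
  intros H. revert pre. induction H; intros pre; [constructor|].
  apply steps_trans with (Lab l (pre ++ y :: l0)).
  - apply steps_lab1; auto.
  - replace (pre ++ y :: l0) with ((pre ++ [y]) ++ l0) by (rewrite <- app_assoc; reflexivity).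
    replace (pre ++ y :: l') with ((pre ++ [y]) ++ l') by (rewrite <- app_assoc; reflexivity).
    apply IHForall2.
Qed.

Lemma steps_lab D l Ms Ms' : Forall2 (steps D) Ms Ms' -> steps D (Lab l Ms) (Lab l Ms').
Proof. intros H. apply (steps_lab_gen D l [] Ms Ms' H). Qed.

Lemma step_mono D D' t t' : (forall e, In e D -> In e D') -> step D t t' -> step D' t t'.
Proof.
  intros Hi. induction 1; try (constructor; auto; fail).
  - destruct H. econstructor. split; eauto.
Qed.

Lemma steps_mono D D' t t' : (forall e, In e D -> In e D') -> steps D t t' -> steps D' t t'.
Proof. intros Hi. induction 1; econstructor; eauto using step_mono. Qed.

Lemma steps_univ D i P : steps D (Univ i) P -> P = Univ i.
Proof. intros H. remember (Univ i) as u. induction H; subst; auto. inversion H. Qed.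

Lemma steps_var D n P : steps D (Var n) P -> P = Var n.
Proof. intros H. remember (Var n) as u. induction H; subst; auto. inversion H. Qed.

Lemma steps_pi_inv D A B P : steps D (Pi A B) P ->
  exists A' B', P = Pi A' B' /\ steps D A A' /\ steps D B B'.
Proof.
  intros H. remember (Pi A B) as u. revert A B Hequ. induction H; intros A B ->.
  - exists A, B. repeat split; constructor.
  - inversion H; subst.
    + destruct (IHsteps A' B eq_refl) as [A2 [B2 [-> [h1 h2]]]].
      exists A2, B2. repeat split; auto. econstructor; eauto.
    + destruct (IHsteps A B' eq_refl) as [A2 [B2 [-> [h1 h2]]]].
      exists A2, B2. repeat split; auto. econstructor; eauto.
Qed.

Lemma steps_lab_inv D l Ms P : steps D (Lab l Ms) P -> exists Ms', P = Lab l Ms'.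
Proof.
  intros H. remember (Lab l Ms) as u. revert Ms Hequ. induction H; intros Ms ->.
  - eauto.
  - inversion H; subst. eauto.
Qed.

Section Conf.
Variable Dg : label_ctx.
Hypothesis Hfun : names_fun Dg.
Hypothesis Hcl : forall e, In e Dg -> closed_at (S (length (lparams e))) (lbody e).
Hypothesis Hgb : forall e, In e Dg -> good Dg (lbody e).

Inductive pred : term -> term -> Prop :=
| p_var n : pred (Var n) (Var n)
| p_univ i : pred (Univ i) (Univ i)
| p_pi A A' B B' : pred A A' -> pred B B' -> pred (Pi A B) (Pi A' B')
| p_app M M' N N' : pred M M' -> pred N N' -> pred (App M N) (App M' N')
| p_lab l Ms Ms' : Forall2 pred Ms Ms' -> pred (Lab l Ms) (Lab l Ms')
| p_beta l Ms Ms' N N' e : label_in Dg l e -> length Ms = length (lparams e) ->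
    Forall2 pred Ms Ms' -> pred N N' ->
    pred (App (Lab l Ms) N) (subst (tele_subst_last Ms' N') (lbody e)).

Lemma pred_ind' (P : term -> term -> Prop) :
  (forall n, P (Var n) (Var n)) ->
  (forall i, P (Univ i) (Univ i)) ->
  (forall A A' B B', pred A A' -> P A A' -> pred B B' -> P B B' -> P (Pi A B) (Pi A' B')) ->
  (forall M M' N N', pred M M' -> P M M' -> pred N N' -> P N N' -> P (App M N) (App M' N')) ->
  (forall l Ms Ms', Forall2 (fun a b => pred a b /\ P a b) Ms Ms' -> P (Lab l Ms) (Lab l Ms')) ->
  (forall l Ms Ms' N N' e, label_in Dg l e -> length Ms = length (lparams e) ->
    Forall2 (fun a b => pred a b /\ P a b) Ms Ms' -> pred N N' -> P N N' ->
    P (App (Lab l Ms) N) (subst (tele_subst_last Ms' N') (lbody e))) ->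
  forall t t', pred t t' -> P t t'.
Proof.
  intros C1 C2 C3 C4 C5 C6. fix IH 3. intros t t' H. destruct H.
  - apply C1. - apply C2. - apply C3; auto. - apply C4; auto.
  - apply C5. induction H; constructor; auto.
  - apply C6; auto. match goal with Hf : Forall2 pred _ _ |- _ => clear - IH Hf; induction Hf; constructor; auto end.
Qed.

Lemma Forall2_refl_F {A} (R : A -> A -> Prop) l : Forall (fun x => R x x) l -> Forall2 R l l.
Proof. induction 1; constructor; auto. Qed.

Lemma pred_refl t : pred t t.
Proof.
  induction t using term_ind'; constructor; auto. apply Forall2_refl_F; auto.
Qed.

Lemma Forall2_map_both {A B} (R : A -> A -> Prop) (R' : B -> B -> Prop) (f : A -> B) l l' :
  Forall2 (fun a b => R a b /\ R' (f a) (f b)) l l' -> Forall2 R' (map f l) (map f l').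
Proof. induction 1; simpl; constructor; tauto. Qed.

Lemma beta_comm sigma Ms N body : closed_at (S (length Ms)) body ->
  subst sigma (subst (tele_subst_last Ms N) body) =
  subst (tele_subst_last (map (subst sigma) Ms) (subst sigma N)) body.
Proof.
  intros Hc. rewrite subst_subst. eapply subst_closed_ext; [exact Hc|].
  intros [|j] Hj; simpl; [reflexivity|]. unfold tele_subst_last, scons.
  rewrite tele_map by lia. reflexivity.
Qed.

Lemma pred_ren t t' xi : pred t t' -> pred (ren xi t) (ren xi t').
Proof.
  intros H. revert xi. induction H using pred_ind'; intros xi; simpl; try constructor; auto.
  - apply Forall2_map_both with (R := pred). eapply Forall2_impl; [|exact H]. intros a b [h1 h2]; auto.
  - rewrite !ren_as_subst. rewrite beta_comm.
    2:{ erewrite <- Forall2_length by eassumption. rewrite H0. apply Hcl. apply H. }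
    rewrite <- ren_as_subst.
    replace (map (subst (fun k => Var (xi k))) Ms') with (map (ren xi) Ms')
      by (apply map_ext; intros; apply ren_as_subst).
    econstructor; eauto.
    + rewrite length_map. auto.
    + apply Forall2_map_both with (R := pred). eapply Forall2_impl; [|exact H1]. intros a b [h1 h2]; auto.
    + rewrite <- ren_as_subst. auto.
Qed.

Lemma pred_subst t t' : pred t t' -> forall sigma sigma',
  (forall k, pred (sigma k) (sigma' k)) -> pred (subst sigma t) (subst sigma' t').
Proof.
  intros H. induction H using pred_ind'; intros sigma sigma' Hs; simpl; try constructor; auto.
  - apply IHpred2. intros [|k]; simpl; [constructor|]. apply pred_ren; auto.
  - clear -H Hs. induction H; simpl; constructor; auto. apply H. auto.
  - rewrite beta_comm.
    2:{ erewrite <- Forall2_length by eassumption. rewrite H0. apply Hcl. apply H. }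
    econstructor; eauto.
    + rewrite length_map. auto.
    + clear -H1 Hs. induction H1; simpl; constructor; auto. apply H. auto.
Qed.

Lemma fold_pred Ms Ms' s s' : Forall2 pred Ms Ms' -> (forall k, pred (s k) (s' k)) ->
  forall k, pred (fold_left (fun sigma M => scons M sigma) Ms s k)
                 (fold_left (fun sigma M => scons M sigma) Ms' s' k).
Proof.
  intros H. revert s s'. induction H; intros s s' Hs; simpl; auto.
  apply IHForall2. intros [|k]; simpl; auto.
Qed.

Lemma pred_tele_last Ms Ms' N N' : Forall2 pred Ms Ms' -> pred N N' ->
  forall k, pred (tele_subst_last Ms N k) (tele_subst_last Ms' N' k).
Proof.
  intros H HN [|k]; simpl; auto. unfold tele_subst. apply fold_pred; auto.
  intros; constructor.
Qed.

Definition lookup (l : nat) : option entry := find (fun e => Nat.eqb (lname e) l) Dg.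

Lemma lookup_some l e : lookup l = Some e -> label_in Dg l e.
Proof.
  unfold lookup. intros H. apply find_some in H. destruct H. split; auto. apply Nat.eqb_eq; auto.
Qed.

Lemma lookup_label l e : label_in Dg l e -> lookup l = Some e.
Proof.
  intros [Hin Hn]. unfold lookup. destruct (find (fun e => Nat.eqb (lname e) l) Dg) eqn:E.
  - apply find_some in E. destruct E as [E1 E2]. apply Nat.eqb_eq in E2. f_equal.
    apply Hfun; auto. congruence.
  - exfalso. eapply find_none in E; [|exact Hin]. rewrite Hn, Nat.eqb_refl in E. discriminate.
Qed.

Fixpoint rho (t : term) : term :=
  match t with
  | Var n => Var n
  | Univ i => Univ i
  | Pi A B => Pi (rho A) (rho B)
  | App (Lab l Ms) N =>
      match lookup l with
      | Some e => if Nat.eqb (length Ms) (length (lparams e))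
                  then subst (tele_subst_last (map rho Ms) (rho N)) (lbody e)
                  else App (Lab l (map rho Ms)) (rho N)
      | None => App (Lab l (map rho Ms)) (rho N)
      end
  | App M N => App (rho M) (rho N)
  | Lab l Ms => Lab l (map rho Ms)
  end.

Lemma Forall2_rho Ms Ms' : Forall2 (fun a b => pred a b /\ pred b (rho a)) Ms Ms' ->
  Forall2 pred Ms' (map rho Ms).
Proof. induction 1; simpl; constructor; tauto. Qed.

Lemma triangle t t' : pred t t' -> pred t' (rho t).
Proof.
  intros H. induction H using pred_ind'; simpl; try constructor; auto.
  - destruct M; try (constructor; auto; fail).
    inversion H; subst. inversion IHpred1; subst.
    destruct (lookup n) as [e|] eqn:E; [|constructor; auto].
    destruct (Nat.eqb_spec (length l) (length (lparams e))); [|constructor; auto].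
    econstructor; eauto.
    + apply lookup_some; auto.
    + erewrite <- Forall2_length by eassumption. auto.
  - apply Forall2_rho; auto.
  - rewrite (lookup_label _ _ H). rewrite H0, Nat.eqb_refl.
    apply pred_subst; [apply pred_refl|]. apply pred_tele_last; auto.
    apply Forall2_rho; auto.
Qed.

Inductive pstar : term -> term -> Prop :=
| ps_refl t : pstar t t
| ps_step t u v : pred t u -> pstar u v -> pstar t v.

Lemma strip t t1 t2 : pred t t1 -> pstar t t2 -> exists t3, pstar t1 t3 /\ pred t2 t3.
Proof.
  intros H1 H2. revert t1 H1. induction H2; intros t1 H1.
  - exists t1. split; [constructor|auto].
  - destruct (IHpstar (rho t)) as [t3 [h1 h2]]; [apply triangle; auto|].
    exists t3. split; auto. econstructor; [apply triangle; eauto|]. auto.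
Qed.

Lemma pstar_conf t t1 t2 : pstar t t1 -> pstar t t2 -> exists t3, pstar t1 t3 /\ pstar t2 t3.
Proof.
  intros H1. revert t2. induction H1; intros t2 H2.
  - exists t2. split; auto. constructor.
  - destruct (strip _ _ _ H H2) as [t3 [h1 h2]].
    destruct (IHpstar t3 h1) as [t4 [g1 g2]].
    exists t4. split; auto. econstructor; eauto.
Qed.

Lemma good_tele_last Ms N k : Forall (good Dg) Ms -> good Dg N -> good Dg (tele_subst_last Ms N k).
Proof. intros. destruct k; simpl; auto. apply tele_good; auto. Qed.

Lemma good_step t t' : good Dg t -> step Dg t t' -> good Dg t'.
Proof.
  intros Hg H. induction H; simpl in *; try tauto.
  - destruct Hg as [Hl HN]. apply good_lab in Hl. destruct Hl as [_ HMs].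
    apply good_subst; [intros; apply good_tele_last; auto|]. apply Hgb. apply H.
  - apply good_lab in Hg. apply good_lab. destruct Hg as [[e [He Hl]] HF]. split.
    + exists e. split; auto. rewrite !length_app in *. simpl in *. auto.
    + apply Forall_app in HF. destruct HF as [HF1 HF2]. inversion HF2; subst.
      apply Forall_app. split; auto.
Qed.

Lemma step_pred t t' : good Dg t -> step Dg t t' -> pred t t'.
Proof.
  intros Hg H. induction H; simpl in *.
  - destruct Hg as [Hl HN]. apply good_lab in Hl. destruct Hl as [[e' [He' Hl]] HMs].
    assert (e' = e) by (apply Hfun; [apply He'|apply H|]; destruct He', H; congruence). subst.
    econstructor; eauto; [apply Forall2_refl_F; apply Forall_forall; intros; apply pred_refl|apply pred_refl].
  - constructor; [tauto|apply pred_refl].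
  - constructor; [apply pred_refl|tauto].
  - constructor; [tauto|apply pred_refl].
  - constructor; [apply pred_refl|tauto].
  - apply good_lab in Hg. destruct Hg as [_ HF]. apply Forall_app in HF. destruct HF as [HF1 HF2].
    inversion HF2; subst. constructor. apply Forall2_app.
    + apply Forall2_refl_F. apply Forall_forall; intros; apply pred_refl.
    + constructor; auto. apply Forall2_refl_F. apply Forall_forall; intros; apply pred_refl.
Qed.

Lemma pred_steps t t' : pred t t' -> steps Dg t t'.
Proof.
  intros H. induction H using pred_ind'.
  - constructor. - constructor.
  - apply steps_pi; auto.
  - apply steps_app; auto.
  - apply steps_lab. eapply Forall2_impl; [|exact H]. intros a b [_ h]; exact h.
  - apply steps_trans with (App (Lab l Ms') N').
    + apply steps_app; auto. apply steps_lab. eapply Forall2_impl; [|exact H1]. intros a b [_ h]; exact h.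
    + apply steps_one. constructor. auto.
Qed.

Lemma red_good t t' : good Dg t -> steps Dg t t' -> good Dg t'.
Proof. intros Hg H. induction H; auto. apply IHsteps. eapply good_step; eauto. Qed.

Lemma red_pstar t t' : good Dg t -> steps Dg t t' -> pstar t t'.
Proof.
  intros Hg H. induction H; [constructor|]. econstructor.
  - apply step_pred; eauto.
  - apply IHsteps. eapply good_step; eauto.
Qed.

Lemma pstar_red t t' : pstar t t' -> steps Dg t t'.
Proof. induction 1; [constructor|]. eapply steps_trans; eauto using pred_steps. Qed.

Lemma red_conf t t1 t2 : good Dg t -> steps Dg t t1 -> steps Dg t t2 ->
  exists t3, steps Dg t1 t3 /\ steps Dg t2 t3.
Proof.
  intros Hg H1 H2. destruct (pstar_conf t t1 t2) as [t3 [h1 h2]]; try (apply red_pstar; auto).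
  exists t3. split; apply pstar_red; auto.
Qed.

Lemma red_subst t t' sigma : good Dg t -> steps Dg t t' -> steps Dg (subst sigma t) (subst sigma t').
Proof.
  intros Hg H. induction H; [constructor|].
  apply steps_trans with (subst sigma N).
  - apply pred_steps. apply pred_subst; [apply step_pred; auto|]. intros; apply pred_refl.
  - apply IHsteps. eapply good_step; eauto.
Qed.

End Conf.


Section Sem.
Variable Dg : label_ctx.
Hypothesis Hfun : names_fun Dg.
Hypothesis Hcl : forall e, In e Dg -> closed_at (S (length (lparams e))) (lbody e).
Hypothesis Hgb : forall e, In e Dg -> good Dg (lbody e).

Notation red := (steps Dg).
Notation gd := (good Dg).

Lemma rgood t t' : gd t -> red t t' -> gd t'.
Proof. apply red_good; auto. Qed.
Lemma rsubst t t' sigma : gd t -> red t t' -> red (subst sigma t) (subst sigma t').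
Proof. apply red_subst; auto. Qed.

Definition PiSet (XA : term -> Prop) (F : term -> term -> Prop) : term -> Prop :=
  fun f => gd f /\ forall a, XA a -> F a (App f a).

Inductive RelP (U : nat -> term -> Prop) (i : nat) : term -> (term -> Prop) -> Prop :=
| r_univ M j : gd M -> j < i -> red M (Univ j) -> RelP U i M (U j)
| r_var M n : gd M -> red M (Var n) -> RelP U i M (fun _ => False)
| r_pi M A B XA F : gd M -> red M (Pi A B) -> RelP U i A XA ->
    (forall a, XA a -> RelP U i (subst1 a B) (F a)) ->
    RelP U i M (PiSet XA F).

Fixpoint Uf (i : nat) : nat -> term -> Prop :=
  match i with
  | 0 => fun _ _ => False
  | S i' => fun j M => if Nat.eqb j i' then gd M /\ exists X, RelP (Uf i') i' M X else Uf i' j M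
  end.

Definition UU (j : nat) : term -> Prop := fun M => gd M /\ exists X, RelP (Uf j) j M X.

Lemma Uf_spec i j : j < i -> Uf i j = UU j.
Proof.
  induction i; intros H; [lia|]. simpl. apply functional_extensionality. intros M.
  destruct (Nat.eqb_spec j i).
  - subst. reflexivity.
  - rewrite IHi by lia. reflexivity.
Qed.

Lemma Uf_lt i j M : Uf i j M -> j < i.
Proof.
  induction i; simpl; [tauto|]. destruct (Nat.eqb_spec j i); intros H; [lia|]. specialize (IHi H). lia.
Qed.

Lemma Uf_good i j M : Uf i j M -> gd M.
Proof. intros H. pose proof (Uf_lt _ _ _ H). rewrite Uf_spec in H by auto. apply H. Qed.

Lemma Rel_good U i M X : RelP U i M X -> gd M.
Proof. destruct 1; auto. Qed.

Lemma Rel_set_good U i M X N : (forall j N, U j N -> gd N) -> RelP U i M X -> X N -> gd N.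
Proof.
  intros HU H. revert N. induction H; intros N HN.
  - eauto.
  - destruct HN.
  - apply HN.
Qed.

Lemma Rel_back U i M M' X : RelP U i M' X -> red M M' -> gd M -> RelP U i M X.
Proof.
  intros H Hr Hg. destruct H.
  - eapply r_univ; eauto. eapply steps_trans; eauto.
  - eapply r_var; eauto. eapply steps_trans; eauto.
  - eapply r_pi; eauto. eapply steps_trans; eauto.
Qed.

Lemma Rel_fwd U i M X : RelP U i M X -> forall M', red M M' -> RelP U i M' X.
Proof.
  induction 1; intros M' HM'.
  - destruct (red_conf Dg Hfun Hcl Hgb _ _ _ H HM' H1) as [P [h1 h2]].
    apply steps_univ in h2. subst. eapply r_univ; eauto. apply (rgood M); auto.
  - destruct (red_conf Dg Hfun Hcl Hgb _ _ _ H HM' H0) as [P [h1 h2]].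
    apply steps_var in h2. subst. eapply r_var; eauto. apply (rgood M); auto.
  - destruct (red_conf Dg Hfun Hcl Hgb _ _ _ H HM' H0) as [P [h1 h2]].
    apply steps_pi_inv in h2. destruct h2 as [A2 [B2 [-> [hA hB]]]].
    assert (HgPi : gd (Pi A B)) by (apply (rgood M); auto). destruct HgPi as [HgA HgB].
    apply r_pi with (A := A2) (B := B2); auto.
    + apply (rgood M); auto.
    + intros a Ha. apply H3; auto. apply rsubst; auto.
Qed.

Lemma conf_shape M P Q : gd M -> red M P -> red M Q -> exists R, red P R /\ red Q R.
Proof. intros. eapply red_conf; eauto. Qed.

Lemma Rel_fun U i M X : (forall j N, U j N -> gd N) -> RelP U i M X -> forall Y, RelP U i M Y -> X = Y.
Proof.
  intros HU H. induction H; intros Y HY; destruct HY.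
  - destruct (conf_shape _ _ _ H H1 H4) as [R [h1 h2]].
    apply steps_univ in h1. apply steps_univ in h2. congruence.
  - destruct (conf_shape _ _ _ H H1 H3) as [R [h1 h2]].
    apply steps_univ in h1. apply steps_var in h2. congruence.
  - destruct (conf_shape _ _ _ H H1 H3) as [R [h1 h2]].
    apply steps_univ in h1. apply steps_pi_inv in h2. destruct h2 as [? [? [? _]]]. congruence.
  - destruct (conf_shape _ _ _ H H0 H3) as [R [h1 h2]].
    apply steps_var in h1. apply steps_univ in h2. congruence.
  - reflexivity.
  - destruct (conf_shape _ _ _ H H0 H2) as [R [h1 h2]].
    apply steps_var in h1. apply steps_pi_inv in h2. destruct h2 as [? [? [? _]]]. congruence.
  - destruct (conf_shape _ _ _ H H0 H6) as [R [h1 h2]].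
    apply steps_pi_inv in h1. apply steps_univ in h2. destruct h1 as [? [? [? _]]]. congruence.
  - destruct (conf_shape _ _ _ H H0 H5) as [R [h1 h2]].
    apply steps_pi_inv in h1. apply steps_var in h2. destruct h1 as [? [? [? _]]]. congruence.
  - destruct (conf_shape _ _ _ H H0 H5) as [R [h1 h2]].
    apply steps_pi_inv in h1. apply steps_pi_inv in h2.
    destruct h1 as [A2 [B2 [-> [hA hB]]]]. destruct h2 as [A2' [B2' [E [hA' hB']]]].
    injection E as <- <-.
    assert (HgPi : gd (Pi A B)) by (apply (rgood M); auto). destruct HgPi as [HgA HgB].
    assert (HgPi : gd (Pi A0 B0)) by (apply (rgood M); auto). destruct HgPi as [HgA0 HgB0].
    assert (EX : XA = XA0).
    { apply IHRelP. eapply Rel_back; [|exact hA|exact HgA]. eapply Rel_fwd; eauto. }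
    subst XA0. unfold PiSet. apply functional_extensionality. intros f.
    apply propositional_extensionality.
    assert (EF : forall a, XA a -> F a = F0 a).
    { intros a Ha. apply H3; auto. assert (Hga : gd a) by (eapply Rel_set_good; eauto).
      eapply Rel_back.
      - eapply Rel_fwd; [apply H6; auto|]. unfold subst1. apply rsubst; [exact HgB0|exact hB'].
      - unfold subst1. apply rsubst; [exact HgB|exact hB].
      - apply good_subst; auto. intros [|k]; simpl; auto. }
    split; intros [Hf1 Hf2]; split; auto; intros a Ha.
    + rewrite <- EF; auto.
    + rewrite EF; auto.
Qed.

Lemma Rel_lab U i M X l Ns : RelP U i M X -> red M (Lab l Ns) -> False.
Proof.
  intros H Hr. destruct H.
  - destruct (conf_shape _ _ _ H Hr H1) as [R [h1 h2]].
    apply steps_lab_inv in h1. apply steps_univ in h2. destruct h1. congruence.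
  - destruct (conf_shape _ _ _ H Hr H0) as [R [h1 h2]].
    apply steps_lab_inv in h1. apply steps_var in h2. destruct h1. congruence.
  - destruct (conf_shape _ _ _ H Hr H0) as [R [h1 h2]].
    apply steps_lab_inv in h1. apply steps_pi_inv in h2. destruct h1. destruct h2 as [? [? [? _]]]. congruence.
Qed.

Lemma Rel_cum i k M X : RelP (Uf i) i M X -> i <= k -> RelP (Uf k) k M X.
Proof.
  intros H Hk. induction H.
  - rewrite (Uf_spec i j) by auto. rewrite <- (Uf_spec k j) by lia. eapply r_univ; eauto. lia.
  - eapply r_var; eauto.
  - eapply r_pi; eauto.
Qed.

Lemma Rel_set_back i M X N N' : RelP (Uf i) i M X -> X N' -> red N N' -> gd N -> X N.
Proof.
  intros H. revert N N'. induction H; intros N N' HX Hr Hg.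
  - rewrite Uf_spec in * by auto. destruct HX as [_ [Y HY]]. split; auto.
    exists Y. eapply Rel_back; eauto.
  - destruct HX.
  - destruct HX as [_ HX]. split; auto. intros a Ha. eapply H3; eauto.
    + apply steps_app; [auto|constructor].
    + split; auto. eapply Rel_set_good; [|exact H1|exact Ha]. apply Uf_good.
Qed.

Definition SR (A : term) (X : term -> Prop) : Prop := exists i, RelP (Uf i) i A X.

Lemma SR_fun A X Y : SR A X -> SR A Y -> X = Y.
Proof.
  intros [i Hi] [j Hj]. eapply Rel_fun.
  - apply Uf_good.
  - apply Rel_cum with (k := Nat.max i j) in Hi; [exact Hi|lia].
  - apply Rel_cum with (k := Nat.max i j) in Hj; [exact Hj|lia].
Qed.

Lemma SR_univ i X : SR (Univ i) X -> X = UU i.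
Proof.
  intros [k H]. inversion H; subst.
  - apply steps_univ in H2. injection H2 as ->. apply Uf_spec; auto.
  - apply steps_univ in H1. discriminate.
  - apply steps_univ in H1. discriminate.
Qed.

Lemma SR_univ_intro i : SR (Univ i) (UU i).
Proof.
  exists (S i). rewrite <- (Uf_spec (S i) i) by lia. eapply r_univ; simpl; auto. constructor.
Qed.

Lemma Rel_pi_inv U k A B Z : RelP U k (Pi A B) Z ->
  exists A2 B2 XA F, red A A2 /\ red B B2 /\ RelP U k A2 XA /\
    (forall a, XA a -> RelP U k (subst1 a B2) (F a)) /\ Z = PiSet XA F.
Proof.
  intros H. inversion H; subst.
  - apply steps_pi_inv in H2. destruct H2 as [? [? [? _]]]. discriminate.
  - apply steps_pi_inv in H1. destruct H1 as [? [? [? _]]]. discriminate.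
  - apply steps_pi_inv in H1. destruct H1 as [A2 [B2 [E [h1 h2]]]]. injection E as -> ->.
    exists A2, B2, XA, F. repeat split; auto.
Qed.

Lemma Rel_var_inv U k n X : RelP U k (Var n) X -> X = (fun _ => False).
Proof.
  intros H. inversion H; subst.
  - apply steps_var in H2. discriminate.
  - reflexivity.
  - apply steps_var in H1. discriminate.
Qed.

Definition sat (G : ctx) (sigma : nat -> term) : Prop :=
  (forall k, gd (sigma k)) /\
  forall x A, nth_error G x = Some A ->
    exists X, SR (subst sigma (ren (fun k => k + S x) A)) X /\ X (sigma x).

Lemma sat_cons G sigma a A X : sat G sigma -> gd a -> SR (subst sigma A) X -> X a ->
  sat (A :: G) (scons a sigma).
Proof.
  intros [Hg HG] Ha HA HX. split.
  - intros [|k]; simpl; auto.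
  - intros [|x] B Hx; simpl in Hx.
    + injection Hx as <-. exists X. rewrite subst_scons_shift, subst_ren0. auto.
    + rewrite subst_scons_shift. apply HG; auto.
Qed.

Definition LabOK (e : entry) : Prop :=
  (forall tau, sat (rev (lparams e)) tau -> exists X, SR (subst tau (Pi (ldom e) (lcod e))) X) /\
  (forall tau, sat (ldom e :: rev (lparams e)) tau ->
     exists X, SR (subst tau (lcod e)) X /\ X (subst tau (lbody e))).

Definition WL (D : label_ctx) : Prop := forall e, In e D -> LabOK e.


Lemma lab_sound G l Ms e sigma :
  label_in Dg l e -> length Ms = length (lparams e) -> LabOK e ->
  CSyn Dg (rev (lparams e)) -> closed_at (length (lparams e)) (ldom e) ->
  closed_at (S (length (lparams e))) (lcod e) -> gd (ldom e) -> gd (lcod e) ->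
  Forall gd Ms -> sat G sigma ->
  (forall k, k < length Ms -> exists X,
      SR (subst sigma (subst (tele_subst (firstn k Ms)) (nth k (lparams e) (Var 0)))) X /\
      X (subst sigma (nth k Ms (Var 0)))) ->
  exists X, SR (subst sigma (Pi (subst (tele_subst Ms) (ldom e)) (subst (up (tele_subst Ms)) (lcod e)))) X
    /\ X (subst sigma (Lab l Ms)).
Proof.
  intros Hl Hlen [Ha Hb] HC Hcd Hcc Hgd Hgc HgMs [Hsg HsG] Hk.
  set (tau := tele_subst (map (subst sigma) Ms)).
  assert (HgMss : Forall gd (map (subst sigma) Ms)).
  { apply Forall_map. eapply Forall_impl; [|exact HgMs]. intros; apply good_subst; auto. }
  assert (Htg : forall k, gd (tau k)) by (intros; apply tele_good; auto).
  assert (Ht : sat (rev (lparams e)) tau).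
  { split; auto. intros x A Hx.
    destruct (HC x A Hx) as [_ HcA]. rewrite length_rev in HcA.
    rewrite nth_error_rev in Hx. destruct (Nat.ltb_spec x (length (lparams e))) as [Hxn|]; [|discriminate].
    set (k := length (lparams e) - S x) in *.
    apply (nth_error_nth _ _ (Var 0)) in Hx.
    destruct (Hk k ltac:(lia)) as [X [HX HXm]]. exists X.
    rewrite <- Hx in HcA |- *.
    replace (subst tau (ren (fun j => j + S x) (nth k (lparams e) (Var 0))))
      with (subst sigma (subst (tele_subst (firstn k Ms)) (nth k (lparams e) (Var 0)))).
    - split; auto. unfold tau. rewrite tele_map by lia. rewrite tele_spec.
      destruct (Nat.ltb_spec x (length Ms)); [|lia].
      replace (length Ms - S x) with k by lia. auto.
    - rewrite subst_ren, subst_subst. eapply subst_closed_ext; [exact HcA|].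
      intros j Hj. unfold tau. rewrite tele_map by lia. f_equal.
      rewrite !tele_spec. rewrite length_firstn.
      destruct (Nat.ltb_spec j (Nat.min k (length Ms))); [|lia].
      destruct (Nat.ltb_spec (j + S x) (length Ms)); [|lia].
      rewrite nth_firstn. destruct (Nat.ltb_spec (Nat.min k (length Ms) - S j) k); [|lia].
      f_equal. lia. }
  destruct (Ha tau Ht) as [X [kk HX]].
  assert (Eq : subst sigma (Pi (subst (tele_subst Ms) (ldom e)) (subst (up (tele_subst Ms)) (lcod e)))
               = subst tau (Pi (ldom e) (lcod e))).
  { simpl. f_equal.
    - rewrite subst_subst. eapply subst_closed_ext; [exact Hcd|]. intros j Hj.
      unfold tau. rewrite tele_map by lia. reflexivity.
    - rewrite subst_subst. eapply subst_closed_ext; [exact Hcc|]. intros [|j] Hj; simpl; [reflexivity|].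
      rewrite subst_up_lift. unfold tau. rewrite tele_map by lia. reflexivity. }
  rewrite Eq. exists X. split; [exists kk; auto|].
  simpl in HX. apply Rel_pi_inv in HX. destruct HX as [A2 [B2 [XA [F [hA [hB [HA2 [HF ->]]]]]]]].
  assert (HgL : gd (Lab l (map (subst sigma) Ms))).
  { apply good_lab. split; auto. exists e. rewrite length_map. auto. }
  change (subst sigma (Lab l Ms)) with (Lab l (map (subst sigma) Ms)).
  split; auto.
  intros a Haa.
  assert (Hga : gd a) by (eapply Rel_set_good; [apply Uf_good|exact HA2|exact Haa]).
  assert (HgdT : gd (subst tau (ldom e))) by (apply good_subst; auto).
  assert (HXA : SR (subst tau (ldom e)) XA) by (exists kk; eapply Rel_back; eauto).
  destruct (Hb (scons a tau)) as [Y [HY HYm]]; [apply sat_cons with (X := XA); auto|].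
  assert (HgcT : gd (subst (up tau) (lcod e))).
  { apply good_subst; auto. intros [|j]; simpl; auto. apply good_ren; auto. }
  assert (HF' : SR (subst (scons a tau) (lcod e)) (F a)).
  { exists kk. rewrite <- subst1_up. eapply Rel_back; [apply HF; auto| unfold subst1; apply rsubst; auto|].
    apply good_subst; auto. intros [|j]; simpl; auto. }
  rewrite (SR_fun _ _ _ HY HF') in HYm.
  eapply Rel_set_back; [apply HF; auto| exact HYm | |].
  - apply steps_one. apply (step_beta Dg l (map (subst sigma) Ms) a e Hl).
  - simpl. split; auto.
Qed.

Definition Incl (D : label_ctx) : Prop := forall e, In e D -> In e Dg.

Lemma soundness :
  (forall D G, wf D G -> Incl D -> WL D) /\
  (forall D G M A, typing D G M A -> Incl D -> WL D /\
     forall sigma, sat G sigma -> exists X, SR (subst sigma A) X /\ X (subst sigma M)).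
Proof.
  apply (wf_typing_mut (fun D G _ => Incl D -> WL D)
     (fun D G M A _ => Incl D -> WL D /\
       forall sigma, sat G sigma -> exists X, SR (subst sigma A) X /\ X (subst sigma M))).
  - intros _ e [].
  - intros D As A M B i l Hfresh t IHt t0 IHt0 HI.
    assert (HI' : Incl D) by (intros e' He'; apply HI; right; auto).
    destruct (IHt HI') as [HW Ht]. destruct (IHt0 HI') as [_ Ht0].
    intros e' [<-|He']; [|apply HW; auto].
    split; simpl.
    + intros tau Htau. destruct (Ht tau Htau) as [X [HX HXm]]. simpl in HX.
      apply SR_univ in HX. subst X. destruct HXm as [_ [Y HY]]. exists Y, i. exact HY.
    + intros tau Htau. apply Ht0; auto.
  - intros D G A i w IHw t IHt HI. apply IHw; auto.
  - intros D G x A w IHw Hx HI. split; [apply IHw; auto|]. intros sigma [Hg HG]. apply HG; auto.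
  - intros D G i w IHw HI. split; [apply IHw; auto|]. intros sigma Hs. simpl.
    exists (UU (S i)). split; [apply SR_univ_intro|]. split; [simpl; auto|].
    exists (Uf (S i) i). apply r_univ; [simpl; auto|lia|constructor].
  - intros D G A B i j t IHt t0 IHt0 HI.
    destruct (IHt HI) as [HW HA]. destruct (IHt0 HI) as [_ HB]. split; auto.
    destruct (proj2 syn_inv _ _ _ _ t0) as [_ [_ [HgB _]]].
    apply (good_mono _ Dg) in HgB; auto.
    intros sigma Hs. destruct (HA sigma Hs) as [X [HX HAm]]. simpl in HX.
    apply SR_univ in HX. subst X. destruct HAm as [HgAs [XA HXA]].
    assert (Hch : forall a, exists Y, XA a -> RelP (Uf j) j (subst1 a (subst (up sigma) B)) Y).
    { intros a. destruct (classic (XA a)) as [Ha|Ha]; [|exists (fun _ => False); tauto].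
      assert (Hga : gd a) by (eapply Rel_set_good; [apply Uf_good|exact HXA|exact Ha]).
      destruct (HB (scons a sigma)) as [Y [HY HYm]].
      { apply sat_cons with (X := XA); auto. exists i; exact HXA. }
      simpl in HY. apply SR_univ in HY. subst Y. destruct HYm as [_ [Z HZ]].
      exists Z. intros _. rewrite subst1_up. exact HZ. }
    set (F := fun a => proj1_sig (constructive_indefinite_description _ (Hch a))).
    assert (HF : forall a, XA a -> RelP (Uf j) j (subst1 a (subst (up sigma) B)) (F a)).
    { intros a Ha. unfold F. destruct (constructive_indefinite_description _ _) as [Y HY]. simpl. auto. }
    destruct Hs as [Hsg _].
    assert (Hgs : gd (subst sigma (Pi A B))).
    { simpl. split; auto. apply good_subst; auto. intros [|k]; simpl; auto. apply good_ren. auto. }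
    exists (UU (Nat.max i j)). split; [apply SR_univ_intro|]. split; auto.
    exists (PiSet XA F). simpl.
    apply r_pi with (A := subst sigma A) (B := subst (up sigma) B); auto; [constructor| |].
    + apply Rel_cum with i; auto; lia.
    + intros a Ha. apply Rel_cum with j; auto; lia.
  - intros D G M N A B t IHt t0 IHt0 HI.
    destruct (IHt HI) as [HW HM]. destruct (IHt0 HI) as [_ HN]. split; auto.
    destruct (proj2 syn_inv _ _ _ _ t) as [_ [_ [_ [[HgA HgB] _]]]].
    apply (good_mono _ Dg) in HgA; auto. apply (good_mono _ Dg) in HgB; auto.
    intros sigma Hs. destruct (HM sigma Hs) as [Z [[k HZ] HMm]]. simpl in HZ.
    apply Rel_pi_inv in HZ. destruct HZ as [A2 [B2 [XA [F [hA [hB [HA2 [HF ->]]]]]]]].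
    destruct (HN sigma Hs) as [X [HX HNm]].
    destruct Hs as [Hsg _].
    assert (HgAs : gd (subst sigma A)) by (apply good_subst; auto).
    assert (HgBs : gd (subst (up sigma) B)).
    { apply good_subst; auto. intros [|j]; simpl; auto. apply good_ren; auto. }
    assert (E : XA = X).
    { apply SR_fun with (subst sigma A); auto. exists k. eapply Rel_back; eauto. }
    subst X. destruct HMm as [_ HMm]. specialize (HMm _ HNm).
    exists (F (subst sigma N)). split; [|exact HMm]. rewrite subst_subst1. exists k.
    assert (HgN : gd (subst sigma N)) by (eapply Rel_set_good; [apply Uf_good|exact HA2|exact HNm]).
    eapply Rel_back; [apply HF; auto| unfold subst1; apply rsubst; auto|].
    apply good_subst; auto. intros [|j]; simpl; auto.
  - intros D G M A B i t IHt c t0 IHt0 HI.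
    destruct (IHt HI) as [HW HM]. destruct (IHt0 HI) as [_ HB]. split; auto.
    destruct (proj2 syn_inv _ _ _ _ t) as [_ [_ [_ [HgA _]]]].
    destruct (proj2 syn_inv _ _ _ _ t0) as [_ [_ [HgB _]]].
    apply (good_mono _ Dg) in HgA; auto. apply (good_mono _ Dg) in HgB; auto.
    intros sigma Hs. destruct (HM sigma Hs) as [X [[k HX] HXm]].
    destruct (HB sigma Hs) as [U [HU HUm]]. simpl in HU. apply SR_univ in HU. subst U.
    destruct HUm as [HgBs [Y HY]].
    destruct c as [A' B' P h1 h2 | L M0 M' l Ns e h1 h2 h3 h4 | L M0 M' l Ns e h1 h2 h3 h4].
    + apply (steps_mono _ Dg) in h1; auto. apply (steps_mono _ Dg) in h2; auto.
      exists X. split; auto. exists k.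
      eapply Rel_back; [eapply Rel_fwd; [exact HX|apply rsubst; [exact HgA|exact h1]]|apply rsubst; [exact HgB|exact h2]|exact HgBs].
    + exfalso. apply (steps_mono _ Dg) in h1; auto.
      apply (rsubst _ _ sigma HgA) in h1. simpl in h1. eapply Rel_lab; [exact HX|exact h1].
    + exfalso. apply (steps_mono _ Dg) in h1; auto.
      apply (rsubst _ _ sigma HgB) in h1. simpl in h1. eapply Rel_lab; [exact HY|exact h1].
  - intros D G l Ms e w IHw Hl Hlen Hk IHk HI.
    pose proof (IHw HI) as HW. split; auto.
    destruct (proj1 syn_inv _ _ w) as [[Hn HE] _].
    destruct (HE e (proj1 Hl)) as [HCe [Hgd [Hgc [_ [Hcd [Hcc _]]]]]].
    intros sigma Hs.
    apply lab_sound with (G := G); auto.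
    + destruct Hl; split; auto.
    + apply HW. apply Hl.
    + eapply CSyn_mono; [|exact HCe]. auto.
    + eapply good_mono; [|exact Hgd]; auto.
    + eapply good_mono; [|exact Hgc]; auto.
    + apply Forall_of_nth. intros k Hk'. destruct (proj2 syn_inv _ _ _ _ (Hk k Hk')) as [_ [_ [HgM _]]].
      eapply good_mono; [|exact HgM]; auto.
    + intros k Hk'. apply (IHk k Hk' HI). auto.
Qed.
End Sem.


Theorem theorem3p24 :
  ~ (exists (D : label_ctx) (i : nat) (M : term),
       typing D nil M (Pi (Univ i) (Var 0))).
Proof.
  intros [D [i [M H]]].
  destruct (proj2 syn_inv _ _ _ _ H) as [[Hn HE] _].
  assert (Hcl : forall e, In e D -> closed_at (S (length (lparams e))) (lbody e)) by (intros e He; apply HE; auto).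
  assert (Hgb : forall e, In e D -> good D (lbody e)) by (intros e He; apply HE; auto).
  destruct (proj2 (soundness D Hn Hcl Hgb) _ _ _ _ H (fun e He => He)) as [_ Hs].
  destruct (Hs Var) as [X [[k HX] HXm]].
  { split; [intros; simpl; auto|]. intros x A Hx. destruct x; discriminate. }
  rewrite subst_id in HXm. simpl in HX.
  apply Rel_pi_inv in HX. destruct HX as [A2 [B2 [XA [F [hA [hB [HA2 [HF ->]]]]]]]].
  apply steps_univ in hA. apply steps_var in hB. subst.
  assert (EXA : XA = UU D i) by (apply SR_univ; auto; exists k; auto).
  subst XA.
  assert (Hv : UU D i (Var 0)).
  { split; simpl; auto. exists (fun _ => False). apply r_var with 0; simpl; auto. constructor. }
  destruct HXm as [_ HXm]. specialize (HXm _ Hv).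
  specialize (HF _ Hv). simpl in HF. apply Rel_var_inv in HF. rewrite HF in HXm. exact HXm.
Qed.
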